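(* Let $x$ and $y$ be two distinct vertices of a graph $G$. Then there exists an $x$–$y$ grain line in $G$ if and only if $G$ contains infinitely many pairwise edge-disjoint $x$–$y$ paths.
   Context: Graphs are simple and may be infinite; $\mathbb{N}=\{0,1,2,\dots\}$. An $x$–$y$ path $P$ induces a linear order $\le_P$ on $V(P)$ (the order of traversal from $x$ to $y$). For distinct vertices $x,y$ of $G$, an $x$–$y$ grain line in $G$ is a pair $(L,\mathcal P)$ where $L\subseteq V(G)$ is a countable set with a linear order $\le_L$ having least element $x$ and greatest element $y$, and $\mathcal P=(P_n)_{n\in\mathbb{N}}$ is a sequence of pairwise edge-disjoint $x$–$y$ paths in $G$, such that: (GL1) $L$ is exactly the set of vertices $v$ for which $\{n\in\mathbb{N}: v\in V(P_n)\}$ is a non-empty final segment $\{n: n\ge m\}$ of $\mathbb{N}$; (GL2) if a vertex of $P_n$ is not in $L$, then it is not a vertex of any $P_m$ with $m\neq n$; (GL3) for every $n\in\mathbb{N}$, the orders $\le_{P_n}$ and $\le_L$ induce the same linear order on $L_{<n}:=L\cap\bigcup_{k<n}V(P_k)$. *)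

(* Defs.v *)
From Stdlib Require Import Arith List.
Import ListNotations.

Record Graph := {
  vtx : Type;
  adj : vtx -> vtx -> Prop;
  adj_sym : forall u v, adj u v -> adj v u;
  adj_irrefl : forall v, ~ adj v v
}.

Section Defs.
Variable G : Graph.

Definition is_path (x y : vtx G) (P : list (vtx G)) : Prop :=
  NoDup P /\
  nth_error P 0 = Some x /\
  nth_error P (length P - 1) = Some y /\
  (forall i u v, nth_error P i = Some u -> nth_error P (S i) = Some v ->
     adj G u v).

Definition path_edge (P : list (vtx G)) (u v : vtx G) : Prop :=
  exists i, nth_error P i = Some u /\ nth_error P (S i) = Some v.

Definition edge_disjoint (P Q : list (vtx G)) : Prop :=
  forall u v, path_edge P u v -> ~ (path_edge Q u v \/ path_edge Q v u).

Definition path_le (P : list (vtx G)) (u w : vtx G) : Prop :=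
  exists i j, i <= j /\ nth_error P i = Some u /\ nth_error P j = Some w.

Definition countable_set (L : vtx G -> Prop) : Prop :=
  exists f : vtx G -> nat, forall u w, L u -> L w -> f u = f w -> u = w.

Definition linear_order_on (L : vtx G -> Prop) (leL : vtx G -> vtx G -> Prop)
  : Prop :=
  (forall u, L u -> leL u u) /\
  (forall u w, L u -> L w -> leL u w -> leL w u -> u = w) /\
  (forall u v w, L u -> L v -> L w -> leL u v -> leL v w -> leL u w) /\
  (forall u w, L u -> L w -> leL u w \/ leL w u).

Definition grain_line (x y : vtx G) (L : vtx G -> Prop)
  (leL : vtx G -> vtx G -> Prop) (P : nat -> list (vtx G)) : Prop :=
  countable_set L /\
  linear_order_on L leL /\
  L x /\ (forall v, L v -> leL x v) /\
  L y /\ (forall v, L v -> leL v y) /\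
  (forall n, is_path x y (P n)) /\
  (forall n m, n <> m -> edge_disjoint (P n) (P m)) /\
  (forall v, L v <-> exists m, forall n, In v (P n) <-> m <= n) /\
  (forall n v, In v (P n) -> ~ L v -> forall m, m <> n -> ~ In v (P m)) /\
  (forall n u w,
     L u -> (exists k, k < n /\ In u (P k)) ->
     L w -> (exists k, k < n /\ In w (P k)) ->
     (path_le (P n) u w <-> leL u w)).

Definition inf_edge_disjoint_paths (x y : vtx G) : Prop :=
  exists S : list (vtx G) -> Prop,
    (forall P, S P -> is_path x y P) /\
    (forall P Q, S P -> S Q -> P <> Q -> edge_disjoint P Q) /\
    ~ (exists l : list (list (vtx G)), forall P, S P -> In P l).

End Defs.

(* Main.v *)
Require Import Defs.
From Stdlib Require Import Arith List Lia Classical ClassicalEpsilon Cantor FinFun.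
Import ListNotations.

Section S.
Variable G : Graph.
Notation V := (vtx G).

Lemma path_has_edge (x y : V) P : x <> y -> is_path G x y P ->
  exists v, path_edge G P x v.
Proof.
  intros Hxy [Hnd [H0 [Hl Ha]]].
  remember (length P) as len eqn:E; destruct len as [|n].
  - destruct P; simpl in *; discriminate.
  - destruct n as [|n].
    + destruct P; simpl in *; congruence.
    + destruct (nth_error P 1) as [v|] eqn:E1.
      * exists v. exists 0. auto.
      * apply nth_error_None in E1. lia.
Qed.

Lemma forward (x y : V) (Hxy : x <> y) (P : nat -> list V) :
  (forall n, is_path G x y (P n)) ->
  (forall n m, n <> m -> edge_disjoint G (P n) (P m)) ->
  inf_edge_disjoint_paths G x y.
Proof.
  intros Hp Hd.
  assert (Hinj : forall n m, P n = P m -> n = m).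
  { intros n m E. destruct (Nat.eq_dec n m) as [|Hne]; auto.
    exfalso. destruct (path_has_edge x y (P n) Hxy (Hp n)) as [v Hv].
    apply (Hd n m Hne x v Hv). left. rewrite <- E. exact Hv. }
  exists (fun Q => exists n, P n = Q). split; [|split].
  - intros Q [n <-]. apply Hp.
  - intros Q R [n <-] [m <-] Hne. apply Hd. intros ->. apply Hne; reflexivity.
  - intros [l Hl].
    assert (HN : NoDup (map P (seq 0 (S (length l))))).
    { apply Injective_map_NoDup. intros a b; apply Hinj. apply seq_NoDup. }
    assert (Hi : incl (map P (seq 0 (S (length l)))) l).
    { intros Q HQ. apply in_map_iff in HQ. destruct HQ as [n [<- _]].
      apply Hl. eauto. }
    pose proof (NoDup_incl_length HN Hi) as Hlen.
    rewrite length_map, length_seq in Hlen. lia.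
Qed.
End S.

Definition inf (I : nat -> Prop) := forall N, exists n, N <= n /\ I n.
Definition const (p : nat -> Prop) (J : nat -> Prop) :=
  forall j j', J j -> J j' -> (p j <-> p j').

Lemma ramsey1 I p : inf I ->
  exists J, (forall n, J n -> I n) /\ inf J /\ const p J.
Proof.
  intros Hi.
  destruct (classic (inf (fun n => I n /\ p n))) as [H|H].
  - exists (fun n => I n /\ p n). split; [|split].
    + intros n [? ?]; auto.
    + exact H.
    + intros j j' [_ Hj] [_ Hj']; tauto.
  - unfold inf in H. apply not_all_ex_not in H. destruct H as [N HN].
    exists (fun n => I n /\ N <= n). split; [|split].
    + intros n [? ?]; auto.
    + intros M. destruct (Hi (max M N)) as [n [Hn In]]. exists n.
      split; [lia|split; [auto|lia]].
    + intros j j' [Ij Nj] [Ij' Nj']. split; intro Hp; exfalso; apply HN; eauto.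
Qed.

Lemma ramseyL {A} (l : list A) (p : A -> nat -> Prop) I : inf I ->
  exists J, (forall n, J n -> I n) /\ inf J /\ forall a, In a l -> const (p a) J.
Proof.
  revert I. induction l as [|a l IH]; intros I Hi.
  - exists I. split; [auto|split; [auto|]]. intros a [].
  - destruct (IH I Hi) as [J1 [H1 [H2 H3]]].
    destruct (ramsey1 J1 (p a) H2) as [J2 [H4 [H5 H6]]].
    exists J2. split; [auto|split; [auto|]].
    intros b [<-|Hb]; auto.
    intros j j' Hj Hj'. apply H3; auto.
Qed.

Section B.
Variable G : Graph.
Notation V := (vtx G).
Variables x y : V.
Variable Q : nat -> list V.
Hypothesis HQp : forall n, is_path G x y (Q n).
Hypothesis HQd : forall n m, n <> m -> edge_disjoint G (Q n) (Q m).

Definition Spec (I : nat -> Prop) (k : nat) (I' : nat -> Prop) :=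
  I k /\ (forall n, I' n -> I n) /\ (forall n, I' n -> k < n) /\ inf I' /\
  (forall v, In v (Q k) -> const (fun n => In v (Q n)) I') /\
  (forall u w, In u (Q k) -> In w (Q k) -> const (fun n => path_le G (Q n) u w) I').

Lemma step_ex I : exists r : nat * (nat -> Prop), inf I -> Spec I (fst r) (snd r).
Proof.
  destruct (classic (inf I)) as [Hi|Hn]; [|exists (0, I); tauto].
  destruct (Hi 0) as [k [_ Ik]].
  set (I1 := fun n => I n /\ k < n).
  assert (Hi1 : inf I1).
  { intros N. destruct (Hi (max N (S k))) as [n [Hn In]]. exists n.
    unfold I1; split; [lia|split; [auto|lia]]. }
  destruct (ramseyL (Q k) (fun v n => In v (Q n)) I1 Hi1) as [J1 [A1 [A2 A3]]].
  destruct (ramseyL (list_prod (Q k) (Q k))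
     (fun uw n => path_le G (Q n) (fst uw) (snd uw)) J1 A2) as [J2 [B1 [B2 B3]]].
  exists (k, J2). intros _. simpl. split; [auto|split; [|split; [|split; [auto|split]]]].
  - intros n Hn. apply A1, B1, Hn.
  - intros n Hn. apply A1, B1, Hn.
  - intros v Hv j j' Hj Hj'. apply A3; auto.
  - intros u w Hu Hw. apply (B3 (u, w)). apply in_prod; auto.
Qed.

Definition step (I : nat -> Prop) : nat * (nat -> Prop) :=
  proj1_sig (constructive_indefinite_description _ (step_ex I)).

Lemma step_spec I : inf I -> Spec I (fst (step I)) (snd (step I)).
Proof. unfold step. destruct (constructive_indefinite_description _ _). simpl. auto. Qed.

Fixpoint Is (n : nat) : nat -> Prop :=
  match n with 0 => fun _ => True | S n => snd (step (Is n)) end.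
Definition a n := fst (step (Is n)).
Definition P n := Q (a n).

Lemma Is_inf n : inf (Is n).
Proof.
  induction n as [|n IH].
  - intros N; exists N; simpl; auto.
  - simpl. destruct (step_spec _ IH) as [_ [_ [_ [H _]]]]. exact H.
Qed.

Lemma spec_n n : Spec (Is n) (a n) (Is (S n)).
Proof. apply step_spec, Is_inf. Qed.

Lemma Is_mono n m : n <= m -> forall k, Is m k -> Is n k.
Proof.
  induction 1 as [|m Hle IHle]; auto. intros k Hk. apply IHle.
  destruct (spec_n m) as [_ [H2 _]]. auto.
Qed.

Lemma a_in n m : n < m -> Is (S n) (a m).
Proof.
  intros H. apply (Is_mono (S n) m H). destruct (spec_n m) as [H1 _]. exact H1.
Qed.

Lemma a_incr n m : n < m -> a n < a m.
Proof.
  intros H. destruct (spec_n n) as [_ [_ [H3 _]]]. apply H3, a_in, H.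
Qed.

Lemma K1 f v j j' : In v (P f) -> f < j -> f < j' -> (In v (P j) <-> In v (P j')).
Proof.
  intros Hv Hj Hj'. destruct (spec_n f) as [_ [_ [_ [_ [H5 _]]]]].
  apply (H5 v Hv); apply a_in; auto.
Qed.

Lemma K2 f u w j j' : In u (P f) -> In w (P f) -> f < j -> f < j' ->
  (path_le G (P j) u w <-> path_le G (P j') u w).
Proof.
  intros Hu Hw Hj Hj'. destruct (spec_n f) as [_ [_ [_ [_ [_ H6]]]]].
  apply (H6 u w Hu Hw); apply a_in; auto.
Qed.

Lemma P_path n : is_path G x y (P n).
Proof. apply HQp. Qed.

Lemma P_disj n m : n <> m -> edge_disjoint G (P n) (P m).
Proof.
  intros H. apply HQd. intros E.
  destruct (Nat.lt_trichotomy n m) as [h|[h|h]]; [| contradiction |];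
  pose proof (a_incr _ _ h); lia.
Qed.


Lemma pl_refl (L : list V) u : In u L -> path_le G L u u.
Proof. intros H. apply In_nth_error in H. destruct H as [i Hi]. exists i, i; auto. Qed.

Lemma nodup_idx (L : list V) i j u : NoDup L -> nth_error L i = Some u ->
  nth_error L j = Some u -> i = j.
Proof.
  intros Hn Hi Hj. apply (proj1 (NoDup_nth_error L) Hn).
  - apply nth_error_Some. congruence.
  - congruence.
Qed.

Lemma pl_antisym (L : list V) u w : NoDup L -> path_le G L u w -> path_le G L w u -> u = w.
Proof.
  intros Hn [i [j [Hij [Hi Hj]]]] [j' [i' [Hji [Hj' Hi']]]].
  pose proof (nodup_idx L _ _ _ Hn Hi Hi'). pose proof (nodup_idx L _ _ _ Hn Hj Hj').
  subst. assert (i' = j') by lia. subst. congruence.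
Qed.

Lemma pl_trans (L : list V) u v w : NoDup L -> path_le G L u v -> path_le G L v w -> path_le G L u w.
Proof.
  intros Hn [i [j [Hij [Hi Hj]]]] [j' [k [Hjk [Hj' Hk]]]].
  pose proof (nodup_idx L _ _ _ Hn Hj Hj'). subst. exists i, k. split; [lia|auto].
Qed.

Lemma pl_total (L : list V) u w : In u L -> In w L -> path_le G L u w \/ path_le G L w u.
Proof.
  intros Hu Hw. apply In_nth_error in Hu, Hw. destruct Hu as [i Hi], Hw as [j Hj].
  destruct (le_ge_dec i j); [left; exists i, j | right; exists j, i]; auto.
Qed.

Definition Lset v := exists m, forall n, In v (P n) <-> m <= n.
Definition leL u w := exists N, forall n, N <= n -> path_le G (P n) u w.

Lemma common u w : Lset u -> Lset w -> exists N, In u (P N) /\ In w (P N) /\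
  forall n, N <= n -> In u (P n) /\ In w (P n).
Proof.
  intros [mu Hu] [mw Hw]. exists (max mu mw).
  split; [apply Hu; lia|split; [apply Hw; lia|]].
  intros n Hn; split; [apply Hu|apply Hw]; lia.
Qed.

Lemma leL_total u w : Lset u -> Lset w -> leL u w \/ leL w u.
Proof.
  intros Hu Hw. destruct (common u w Hu Hw) as [N [HuN [HwN Hall]]].
  destruct (Hall (S N) ltac:(lia)) as [A B].
  destruct (pl_total _ u w A B) as [H|H]; [left|right]; exists (S N); intros n Hn.
  - apply (K2 N u w (S N) n HuN HwN); [lia|lia|auto].
  - apply (K2 N w u (S N) n HwN HuN); [lia|lia|auto].
Qed.

Lemma first_occ v n : In v (P n) -> exists f, In v (P f) /\ forall k, k < f -> ~ In v (P k).
Proof.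
  induction n as [n IH] using lt_wf_ind. intros H.
  destruct (classic (exists k, k < n /\ In v (P k))) as [[k [Hk Ik]]|Hno].
  - apply (IH k Hk Ik).
  - exists n. split; auto. intros k Hk Ik. apply Hno; eauto.
Qed.

Lemma x_in n : In x (P n).
Proof. destruct (P_path n) as [_ [H _]]. eapply nth_error_In; eauto. Qed.
Lemma y_in n : In y (P n).
Proof. destruct (P_path n) as [_ [_ [H _]]]. eapply nth_error_In; eauto. Qed.

Lemma grain : grain_line G x y Lset leL P.
Proof.
  unfold grain_line.
  split; [|split; [|split; [|split; [|split; [|split; [|split; [|split; [|split; [|split]]]]]]]]].
  -
    assert (Hc : forall v, exists c, Lset v -> exists m i, (forall n, In v (P n) <-> m <= n)
               /\ nth_error (P m) i = Some v /\ c = to_nat (m, i)).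
    { intros v. destruct (classic (Lset v)) as [[m Hm]|Hn]; [|exists 0; tauto].
      assert (Hin : In v (P m)) by (apply Hm; lia).
      apply In_nth_error in Hin. destruct Hin as [i Hi].
      exists (to_nat (m, i)). intros _. exists m, i. auto. }
    exists (fun v => proj1_sig (constructive_indefinite_description _ (Hc v))).
    intros u w Hu Hw E.
    destruct (constructive_indefinite_description _ (Hc u)) as [cu Su].
    destruct (constructive_indefinite_description _ (Hc w)) as [cw Sw]. simpl in E.
    destruct (Su Hu) as [mu [iu [_ [Nu Eu]]]]. destruct (Sw Hw) as [mw [iw [_ [Nw Ew]]]].
    rewrite Eu, Ew in E. apply (f_equal of_nat) in E. rewrite !cancel_of_to in E. inversion E. subst.
    congruence.
  -
    split; [|split; [|split]].
    + intros u [m Hm]. exists m. intros n Hn. apply pl_refl, Hm, Hn.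
    + intros u w Hu Hw [N1 H1] [N2 H2].
      apply (pl_antisym (P (max N1 N2))); [apply (P_path (max N1 N2))|apply H1; lia|apply H2; lia].
    + intros u v w _ _ _ [N1 H1] [N2 H2]. exists (max N1 N2). intros n Hn.
      apply (pl_trans (P n) u v w); [apply (P_path n)|apply H1; lia|apply H2; lia].
    + apply leL_total.
  - exists 0. intros n; split; [lia|]. intros _. apply x_in.
  - intros v [m Hm]. exists m. intros n Hn.
    assert (Hv : In v (P n)) by (apply Hm, Hn).
    apply In_nth_error in Hv. destruct Hv as [j Hj].
    destruct (P_path n) as [_ [H0 _]]. exists 0, j. split; [lia|auto].
  - exists 0. intros n; split; [lia|]. intros _. apply y_in.
  - intros v [m Hm]. exists m. intros n Hn.
    assert (Hv : In v (P n)) by (apply Hm, Hn).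
    apply In_nth_error in Hv. destruct Hv as [j Hj].
    destruct (P_path n) as [_ [_ [Hl _]]]. exists j, (length (P n) - 1).
    assert (j < length (P n)) by (apply nth_error_Some; congruence).
    split; [lia|auto].
  - apply P_path.
  - apply P_disj.
  - intros v; unfold Lset; tauto.
  - intros n v Hv HL m Hmn Hm.
    destruct (first_occ v n Hv) as [f [Hf Hfirst]].
    destruct (classic (In v (P (S f)))) as [HS|HS].
    + apply HL. exists f. intros k. split.
      * intros Hk. destruct (le_gt_dec f k); auto. exfalso; apply (Hfirst k); auto.
      * intros Hk. destruct (Nat.eq_dec k f) as [->|Hne]; auto.
        apply (K1 f v (S f) k Hf); [lia|lia|auto].
    + assert (Hno : forall j, f < j -> ~ In v (P j)).
      { intros j Hj Ij. apply HS. apply (K1 f v (S f) j Hf); [lia|lia|auto]. }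
      assert (n = f).
      { destruct (Nat.lt_trichotomy n f) as [h|[h|h]]; auto.
        - exfalso; apply (Hfirst n); auto.
        - exfalso; apply (Hno n); auto. }
      assert (m = f).
      { destruct (Nat.lt_trichotomy m f) as [h|[h|h]]; auto.
        - exfalso; apply (Hfirst m); auto.
        - exfalso; apply (Hno m); auto. }
      congruence.
  - intros n u w Hu [k1 [Hk1 Iu]] Hw [k2 [Hk2 Iw]].
    destruct Hu as [mu Hmu], Hw as [mw Hmw].
    assert (mu <= k1) by (apply Hmu; auto).
    assert (mw <= k2) by (apply Hmw; auto).
    set (N := max mu mw).
    assert (HuN : In u (P N)) by (apply Hmu; lia).
    assert (HwN : In w (P N)) by (apply Hmw; lia).
    split.
    + intros Hp. exists (S N). intros n' Hn'.
      apply (K2 N u w n n' HuN HwN); [lia|lia|auto].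
    + intros [N' HN']. apply (K2 N u w (max N' n) n HuN HwN); [lia|lia|].
      apply HN'; lia.
Qed.

End B.

Theorem theorem5p4 (G : Graph) (x y : vtx G) (Hxy : x <> y) :
  (exists (L : vtx G -> Prop) (leL : vtx G -> vtx G -> Prop)
          (P : nat -> list (vtx G)), grain_line G x y L leL P)
  <-> inf_edge_disjoint_paths G x y.
Proof.
  split.
  - intros [L [le [P HP]]].
    destruct HP as [_ [_ [_ [_ [_ [_ [Hp [Hd _]]]]]]]].
    apply (forward G x y Hxy P Hp Hd).
  - intros [S [HS1 [HS2 HS3]]].
    assert (Hg : forall l : list (list (vtx G)), exists r, S r /\ ~ In r l).
    { intros l. apply NNPP. intros Hn. apply HS3. exists l. intros R HR.
      apply NNPP. intros Hni. apply Hn. eauto. }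
    set (g := fun l => proj1_sig (constructive_indefinite_description _ (Hg l))).
    assert (Hgs : forall l, S (g l) /\ ~ In (g l) l).
    { intros l. unfold g. destruct (constructive_indefinite_description _ _). auto. }
    set (H := fix H n := match n with 0 => [] | S n => g (H n) :: H n end).
    set (Q := fun n => g (H n)).
    assert (HQH : forall m n, m < n -> In (Q m) (H n)).
    { intros m n Hmn. induction Hmn as [|n Hle IH].
      - simpl. left. reflexivity.
      - simpl. right. exact IH. }
    assert (HQd : forall n m, n <> m -> edge_disjoint G (Q n) (Q m)).
    { intros n m Hnm. apply HS2; [apply Hgs|apply Hgs|].
      intros E. destruct (Nat.lt_trichotomy n m) as [h|[h|h]]; [|contradiction|].
      - apply (proj2 (Hgs (H m))). fold (Q m). rewrite <- E. apply HQH, h.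
      - apply (proj2 (Hgs (H n))). fold (Q n). rewrite E. apply HQH, h. }
    exists (Lset G Q), (leL G Q), (P G Q).
    apply grain; auto. intros n. apply HS1, Hgs.
Qed.
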